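(* Assume $\hat w=\sup_xw(x)<\infty$. Let $\lambda\ge1$ and $z_1\in\mathbb{S}$. Then $0<w(z_1)\frac{w(z_1)+2\lfloor\lambda\rfloor-\lambda}{(w(z_1)+\lfloor\lambda\rfloor)(w(z_1)+\lfloor\lambda\rfloor-1)}\le\epsilon(\lambda,z_1)\le\frac{2\hat w}{2\hat w+\lambda-1}$, and $\frac1\lambda\le b(\lambda)\le\epsilon(\lambda)\le\frac{2\hat w}{2\hat w+\lambda-1}$, where $b(\lambda)=\frac1{\lfloor\lambda\rfloor}-\frac{\lambda-\lfloor\lambda\rfloor}{(\lfloor\lambda\rfloor+1)\lfloor\lambda\rfloor}$. Moreover, for $\lambda>1$, $1<\frac{\lfloor\lambda\rfloor^2+3\lfloor\lambda\rfloor-\lambda+1}{\lfloor\lambda\rfloor^2-\lfloor\lambda\rfloor+\lambda-1}\le\frac{1+\epsilon(\lambda)}{1-\epsilon(\lambda)}\le\frac{4\hat w+\lambda-1}{\lambda-1}$.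
   Context: Let $\pi,q$ be probability densities with respect to a $\sigma$-finite measure $\mu$ on $\mathbb{X}$ with $q>0$ wherever $\pi>0$; $\pi(dx)=\pi(x)\mu(dx)$, $q(dx)=q(x)\mu(dx)$, $\mathbb{S}=\{\pi>0\}$, $w=\pi/q$ on $\mathbb{S}$ and $0$ elsewhere. For integer $N\ge1$ and $z_1\in\mathbb{S}$, $\epsilon(N,z_1)=\int_{\mathbb{X}^{N-1}}\frac{w(z_1)}{\sum_{i=1}^Nw(z_i)}\prod_{n=2}^Nq(dz_n)$ and $\epsilon(N)=\int_{\mathbb{S}}\epsilon(N,z)\pi(dz)$; for real $\lambda\ge1$ with $\beta=\lfloor\lambda\rfloor+1-\lambda$, $\epsilon(\lambda,x)=\beta\epsilon(\lfloor\lambda\rfloor,x)+(1-\beta)\epsilon(\lfloor\lambda\rfloor+1,x)$ and $\epsilon(\lambda)=\beta\epsilon(\lfloor\lambda\rfloor)+(1-\beta)\epsilon(\lfloor\lambda\rfloor+1)$. *)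

(* Defs.v *)
From HB Require Import structures.
From mathcomp Require Import all_boot all_order all_algebra.
From mathcomp Require Import all_classical all_reals all_analysis.
Set Implicit Arguments. Unset Strict Implicit. Unset Printing Implicit Defensive.
Import Order.TTheory GRing.Theory Num.Theory.
Local Open Scope classical_set_scope.
Local Open Scope ring_scope.
Local Open Scope ereal_scope.

Section Defs.
Context {d : measure_display} {X : measurableType d} {R : realType}.
Variables (mu : {measure set X -> \bar R}) (pi q : X -> R).

Definition wgt (x : X) : R := if (0 < pi x)%R then (pi x / q x)%R else 0%R.

(* ISk a k s = int_{X^k} a / (a + s + sum_{n=1}^k w(z_n)) prod q(dz_n),
   written as the iterated integral (z_1 outermost); q(dz) = q(z) mu(dz). *)
Fixpoint ISk (a : R) (k : nat) (s : R) : \bar R :=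
  match k with
  | O => (a / (a + s))%:E
  | k'.+1 => \int[mu]_z (ISk a k' (s + wgt z)%R * (q z)%:E)
  end.

(* epsilon(N, z1), N >= 1 : integral over X^{N-1} *)
Definition epsN (N : nat) (z1 : X) : \bar R := ISk (wgt z1) N.-1 0%R.

Definition epsNbar (N : nat) : \bar R :=
  \int[mu]_(z in [set x | (0 < pi x)%R]) (epsN N z * (pi z)%:E).

Definition flo (l : R) : nat := Num.truncn l.

Definition betal (l : R) : R := ((flo l)%:R + 1 - l)%R.

Definition epsl (l : R) (x : X) : \bar R :=
  (betal l)%:E * epsN (flo l) x + (1 - betal l)%:E * epsN (flo l).+1 x.

Definition epsL (l : R) : \bar R :=
  (betal l)%:E * epsNbar (flo l) + (1 - betal l)%:E * epsNbar (flo l).+1.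

End Defs.

Definition blam {R : realType} (l : R) : R :=
  ((flo l)%:R^-1 - (l - (flo l)%:R) / (((flo l)%:R + 1) * (flo l)%:R))%R.

(* Main.v *)
Require Import Defs.
From HB Require Import structures.
From mathcomp Require Import all_boot all_order all_algebra.
From mathcomp Require Import all_classical all_reals all_analysis.
From mathcomp Require Import measurable_realfun measurable_fun_approximation lebesgue_integral_monotone_convergence.
From mathcomp Require Import ring lra.
Import Order.TTheory GRing.Theory Num.Theory.
Import numFieldNormedType.Exports.
Local Open Scope classical_set_scope.
Local Open Scope ring_scope.

Section aux.
Local Open Scope ereal_scope.
Context d (T : measurableType d) (R : realType).
Variable mu : {measure set T -> \bar R}.
Import HBNNSimple.

Lemma le_integral_nm (f1 f2 : T -> \bar R) :
  (forall x, 0 <= f1 x) -> measurable_fun setT f1 ->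
  (forall x, f1 x <= f2 x) ->
  \int[mu]_x f1 x <= \int[mu]_x f2 x.
Proof.
move=> h10 mh1 h12.
pose g1 := nnsfun_approx measurableT mh1.
rewrite (@nd_ge0_integral_lim _ _ _ _ _ g1)//; last 2 first.
  by move=> x m n mn; exact/lefP/nd_nnsfun_approx.
  by move=> x; exact: cvg_nnsfun_approx.
apply: lime_le.
  by apply: is_cvg_sintegral => // t m n mn; exact/lefP/nd_nnsfun_approx.
near=> n; rewrite ge0_integralTE//; last first.
  by move=> x; apply: le_trans (h12 x).
apply: ereal_sup_ubound => /=.
exists (g1 n) => // t; rewrite (le_trans _ (h12 _))//.
have := leey (f1 t); rewrite le_eqVlt => /predU1P[->|ftoo].
  by rewrite leey.
have h1tfin : f1 t \is a fin_num.
  by rewrite fin_numE gt_eqF/= ?lt_eqF// (lt_le_trans _ (h10 t)).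
have /= := @cvg_nnsfun_approx _ _ _ _ measurableT _ mh1 (fun x _ => h10 x) t Logic.I.
rewrite -(fineK h1tfin) => /fine_cvgP[ft_near] u_h1.
have Hc : (fun k => (g1 k t)) @ \oo --> fine (f1 t) by exact: u_h1.
rewrite -(cvg_lim _ Hc) // lee_fin; apply: nondecreasing_cvgn_le.
  by move=> // a b ab; exact/lefP/nd_nnsfun_approx.
by apply/cvg_ex; eexists; exact: Hc.
Unshelve. all: by end_near. Qed.

Lemma le_integral_nm2 (f1 f2 : T -> \bar R) :
  measurable_fun setT f1 -> (forall x, 0 <= f2 x) ->
  (forall x, f1 x <= f2 x) ->
  \int[mu]_x f1 x <= \int[mu]_x f2 x.
Proof.
move=> mf1 f20 f12.
rewrite integralE.
apply: (@le_trans _ _ (\int[mu]_x f1^\+ x)).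
  rewrite -[leRHS]sube0; apply: leeB => //.
  by apply: integral_ge0 => x _; exact: funeneg_ge0.
apply: le_integral_nm.
- by move=> x; exact: funepos_ge0.
- exact: measurable_funepos.
- by move=> x; rewrite funeposE ge_max f12 f20.
Qed.
End aux.
Lemma tangent {R : realFieldType} (y w : R) : 0 < y -> 0 <= w ->
  (y + 1)^-1 - (w - 1) * (y + 1)^-1 ^+ 2 <= (y + w)^-1.
Proof.
move=> y0 w0.
have n1 : y + w != 0 by rewrite lt0r_neq0 // ltr_wpDr.
have n2 : y + 1 != 0 by rewrite lt0r_neq0 // ltr_wpDr.
rewrite -subr_ge0.
have -> : (y + w)^-1 - ((y + 1)^-1 - (w - 1) * (y + 1)^-1 ^+ 2) =
   (y + w)^-1 * (y + 1)^-1 ^+ 2 * (w - 1) ^+ 2 by field; rewrite ?n1 ?n2 ?n3 ?n4.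
have yw : 0 < y + w by rewrite ltr_wpDr.
have y1 : 0 < y + 1 by rewrite ltr_wpDr.
apply: mulr_ge0; last exact: sqr_ge0.
by rewrite mulr_ge0 // ?exprn_ge0 // invr_ge0 ltW.
Qed.

Lemma secant {R : realFieldType} (x w B : R) : 0 < x -> 0 <= w -> w <= B ->
  (x + w)^-1 <= x^-1 - w * (x^-1 * (x + B)^-1).
Proof.
move=> x0 w0 wB.
have B0 : 0 <= B by apply: le_trans wB.
have n1 : x + w != 0 by rewrite lt0r_neq0 // ltr_wpDr.
have n2 : x + B != 0 by rewrite lt0r_neq0 // ltr_wpDr.
have n3 : x != 0 by rewrite lt0r_neq0.
rewrite -subr_ge0.
have -> : x^-1 - w * (x^-1 * (x + B)^-1) - (x + w)^-1 =
   w * (B - w) * (x^-1 * (x + B)^-1 * (x + w)^-1) by field; rewrite ?n1 ?n2 ?n3 ?n4.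
rewrite !mulr_ge0 // ?subr_ge0 // invr_ge0 ?ltW // ?ltr_wpDr //.
Qed.

Lemma stepU {R : realFieldType} (x B : R) : 1 <= B -> B <= x ->
  B * x^-1 - B * (x^-1 * (x + B)^-1) <= B / (x + B / (2 * B - 1)).
Proof.
move=> B1 Bx.
have x0 : 0 < x by lra.
have n1 : x != 0 by rewrite lt0r_neq0.
have n2 : x + B != 0 by rewrite lt0r_neq0 //; lra.
have n4 : 2 * B - 1 != 0 by rewrite lt0r_neq0 //; lra.
have a0 : 0 <= B / (2 * B - 1) by rewrite divr_ge0 //; lra.
have n3 : x + B / (2 * B - 1) != 0 by rewrite lt0r_neq0 //; lra.
have n5 : x * (2 * B - 1) + B != 0 by rewrite lt0r_neq0 //; nra.
rewrite -subr_ge0.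
have -> : B / (x + B / (2 * B - 1)) - (B * x^-1 - B * (x^-1 * (x + B)^-1)) =
  B * (B - 1) * (x - B) * (x^-1 * (x + B)^-1 * (x * (2 * B - 1) + B)^-1) by field; rewrite ?n1 ?n2 ?n3 ?n4 ?n5.
rewrite !mulr_ge0 // ?subr_ge0 // ?invr_ge0; nra.
Qed.

Lemma baseU {R : realFieldType} (a s B : R) : 0 < a -> a <= B -> 0 <= s ->
  a / (a + s) <= B / (B + s).
Proof.
move=> a0 aB s0.
have n1 : a + s != 0 by rewrite lt0r_neq0 //; lra.
have n2 : B + s != 0 by rewrite lt0r_neq0 //; lra.
rewrite -subr_ge0.
have -> : B / (B + s) - a / (a + s) = s * (B - a) * ((B + s)^-1 * (a + s)^-1)
  by field; rewrite ?n1 ?n2.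
rewrite !mulr_ge0 // ?subr_ge0 // invr_ge0; lra.
Qed.

Lemma pibound {R : realFieldType} (p q k : R) : 0 < p -> 0 < q -> 0 <= k ->
  (1 + 2 * k) / (1 + k) ^+ 2 * p + - (k / (1 + k) ^+ 2) * q
    <= (p / q) / (p / q + k) * p.
Proof.
move=> p0 q0 k0.
have n1 : q != 0 by rewrite lt0r_neq0.
have n2 : p + k * q != 0 by rewrite lt0r_neq0 //; nra.
have n3 : p / q + k != 0 by rewrite lt0r_neq0 // ltr_wpDr // divr_gt0.
have n4 : 1 + k != 0 by rewrite lt0r_neq0 //; lra.
rewrite -subr_ge0.
have -> : (p / q) / (p / q + k) * p - ((1 + 2 * k) / (1 + k) ^+ 2 * p + - (k / (1 + k) ^+ 2) * q)
   = k ^+ 2 * (p - q) ^+ 2 * ((p + k * q)^-1 * ((1 + k) ^+ 2)^-1)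
  by field; rewrite ?n1 ?n2 ?n3 ?n4.
apply: mulr_ge0; first by rewrite mulr_ge0 // sqr_ge0.
rewrite mulr_ge0 // invr_ge0 ?exprn_ge0; nra.
Qed.

Lemma interpU {R : realFieldType} (B M t : R) : 1 <= B -> 0 <= M -> 0 <= t ->
  (1 - t) * (B / (B + 0 + B / (2 * B - 1) * M)) +
  t * (B / (B + 0 + B / (2 * B - 1) * (M + 1)))
  <= 2 * B / (2 * B + (M + 1 + t) - 1).
Proof.
move=> B1 M0 t0.
have n0 : 2 * B - 1 != 0 by rewrite lt0r_neq0 //; lra.
have n1 : 2 * B - 1 + M != 0 by rewrite lt0r_neq0 //; lra.
have n2 : 2 * B - 1 + M + 1 != 0 by rewrite lt0r_neq0 //; lra.
have n3 : 2 * B - 1 + M + 1 + t != 0 by rewrite lt0r_neq0 //; lra.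
have a0 : 0 <= B / (2 * B - 1) by rewrite divr_ge0 //; lra.
have m1 := mulr_ge0 a0 M0.
have M1 : 0 <= M + 1 by lra.
have m2 := mulr_ge0 a0 M1.
have n4 : B + 0 + B / (2 * B - 1) * M != 0 by rewrite lt0r_neq0 //; lra.
have n5 : B + 0 + B / (2 * B - 1) * (M + 1) != 0 by rewrite lt0r_neq0 //; lra.
have n6 : 2 * B + (M + 1 + t) - 1 != 0 by rewrite lt0r_neq0 //; lra.
rewrite -subr_ge0.
have -> : 2 * B / (2 * B + (M + 1 + t) - 1) - ((1 - t) * (B / (B + 0 + B / (2 * B - 1) * M)) +
  t * (B / (B + 0 + B / (2 * B - 1) * (M + 1)))) =
  ((2 * B - 1 + M + 1) * M + (2 * B - 1) * t ^+ 2) *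
   ((2 * B - 1 + M)^-1 * (2 * B - 1 + M + 1)^-1 * (2 * B - 1 + M + 1 + t)^-1)
  by field; repeat (apply/andP; split); apply: lt0r_neq0; nra.
apply: mulr_ge0; first by rewrite addr_ge0 ?mulr_ge0 ?sqr_ge0 //; lra.
rewrite !mulr_ge0 // invr_ge0; lra.
Qed.

Section aux3.
Local Open Scope ereal_scope.
Context d (T : measurableType d) (R : realType).
Variable mu : {measure set T -> \bar R}.
Import HBNNSimple.

Lemma le_integral_nm3 (f1 f2 : T -> \bar R) :
  (forall x, 0 <= f1 x) -> measurable_fun setT f2 ->
  (forall x, f1 x <= f2 x) ->
  \int[mu]_x f1 x <= \int[mu]_x f2 x.
Proof.
move=> f10 mf2 f12.
rewrite ge0_integralTE //; apply: ge_ereal_sup => _ [h /= hf <-].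
rewrite -integralT_nnsfun; apply: ge0_le_integral => //.
- by move=> x _; rewrite lee_fin.
- exact/measurable_EFinP.
- by move=> x _; apply: le_trans (hf x) (f12 x).
Qed.
End aux3.

Section main.
Context d (X : measurableType d) (R : realType) (mu : {measure set X -> \bar R}) (pi q : X -> R).
Hypothesis mpi : measurable_fun setT pi.
Hypothesis mq : measurable_fun setT q.
Hypothesis pi0 : forall x, 0 <= pi x.
Hypothesis q0 : forall x, 0 <= q x.
Hypothesis ipi : (\int[mu]_x (pi x)%:E)%E = 1%E.
Hypothesis iq : (\int[mu]_x (q x)%:E)%E = 1%E.
Hypothesis piq : forall x, 0 < pi x -> 0 < q x.

Local Notation w := (wgt pi q).

Lemma w_ge0 x : 0 <= w x.
Proof. by rewrite /wgt; case: ifP => // p0; rewrite divr_ge0. Qed.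

Lemma w_gt0 x : 0 < pi x -> 0 < w x.
Proof. by move=> p0; rewrite /wgt p0 divr_gt0 // piq. Qed.

Lemma pi_eq0 x : ~~ (0 < pi x) -> pi x = 0.
Proof. by move=> h; apply/eqP; rewrite eq_le pi0 andbT leNgt. Qed.

Lemma wq x : w x * q x = pi x.
Proof.
rewrite /wgt; case: ifPn => [p0|p0]; last by rewrite mul0r pi_eq0.
by rewrite divfK // lt0r_neq0 // piq.
Qed.

Lemma int_q : mu.-integrable setT (fun x => (q x)%:E).
Proof.
apply/integrableP; split; first exact/measurable_EFinP.
under eq_integral => x _ do rewrite /= ger0_norm //.
by rewrite iq ltry.
Qed.

Lemma int_pi : mu.-integrable setT (fun x => (pi x)%:E).
Proof.
apply/integrableP; split; first exact/measurable_EFinP.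
under eq_integral => x _ do rewrite /= ger0_norm //.
by rewrite ipi ltry.
Qed.

Lemma meas_lin c1 c2 : measurable_fun setT (fun x => (c1 * q x + c2 * pi x)%:E).
Proof.
apply/measurable_EFinP; apply: measurable_funD; apply: measurable_funM => //.
Qed.

Lemma intlin c1 c2 : (\int[mu]_x ((c1 * q x + c2 * pi x)%:E) = (c1 + c2)%:E)%E.
Proof.
rewrite (_ : (fun x => _) = (fun x => c1%:E * (q x)%:E + c2%:E * (pi x)%:E)%E); last first.
  by apply/funext => x; rewrite EFinD !EFinM.
rewrite integralD //; [|exact: integrableZl int_q|exact: integrableZl int_pi].
by rewrite !integralZl // ?int_q ?int_pi // iq ipi !mule1 -EFinD.
Qed.

Lemma ISk_lower k : forall a s, 0 < a -> 0 <= s ->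
  ((a / (a + s + k%:R))%:E <= ISk mu pi q a k s)%E.
Proof.
elim: k => [|k IH] a s a0 s0 /=; first by rewrite addr0.
set y := a + s + k%:R.
have y0 : 0 < y by rewrite /y; apply: ltr_wpDr => //; apply: ltr_wpDr.
set c1 := a * (y + 1)^-1 + a * (y + 1)^-1 ^+ 2.
set c2 := - (a * (y + 1)^-1 ^+ 2).
have -> : a / (a + s + k.+1%:R) = c1 + c2.
  by rewrite /c1 /c2 addrK /y -[k.+1]addn1 natrD addrA.
rewrite -intlin; apply: le_integral_nm2; first exact: meas_lin.
  move=> x; apply: mule_ge0; last by rewrite lee_fin.
  apply: le_trans (IH _ _ a0 (addr_ge0 s0 (w_ge0 x))).
  have k0 : (0:R) <= k%:R := ler0n _ _.
  have wx := w_ge0 x; rewrite lee_fin divr_ge0 //; lra.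
move=> x.
apply: le_trans (lee_wpmul2r _ (IH _ _ a0 (addr_ge0 s0 (w_ge0 x)))); last by rewrite lee_fin.
rewrite -EFinM lee_fin -wq.
have -> : a + (s + w x) + k%:R = y + w x by rewrite /y; ring.
have -> : c1 * q x + c2 * (w x * q x) =
   (a * ((y + 1)^-1 - (w x - 1) * (y + 1)^-1 ^+ 2)) * q x by rewrite /c1 /c2; ring.
apply: ler_wpM2r => //; apply: ler_wpM2l; first exact: ltW.
exact: tangent y0 (w_ge0 x).
Qed.

Lemma ISk_ge0 k a s : 0 < a -> 0 <= s -> (0 <= ISk mu pi q a k s)%E.
Proof.
move=> a0 s0; apply: le_trans (ISk_lower k _ _ a0 s0).
have k0 : (0:R) <= k%:R := ler0n _ _.
rewrite lee_fin divr_ge0 //; lra.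
Qed.


Lemma B_ge1 b : (forall x, w x <= b) -> 1 <= b.
Proof.
move=> wb; rewrite -lee_fin -ipi -[b]addr0 -(intlin b 0).
apply: ge0_le_integral => //.
- by move=> x _; rewrite lee_fin.
- exact/measurable_EFinP.
- exact: meas_lin.
- by move=> x _; rewrite lee_fin mul0r addr0 -wq ler_wpM2r.
Qed.

Lemma inS x : x \in [set x | 0 < pi x] = (0 < pi x).
Proof. by apply/idP/idP => [/set_mem //|h]; exact: mem_set. Qed.

Variable B : R.
Hypothesis wB : forall x, w x <= B.
Hypothesis B1 : 1 <= B.

Lemma ISk_upper k : forall a s, 0 < a -> a <= B -> 0 <= s ->
  (ISk mu pi q a k s <= (B / (B + s + B / (2 * B - 1) * k%:R))%:E)%E.
Proof.
elim: k => [|k IH] a s a0 aB s0 /=.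
  by rewrite mulr0 addr0 lee_fin baseU.
have al0 : 0 <= B / (2 * B - 1).
  have B1' := B1. clear IH; rewrite divr_ge0 //; lra.
set al := B / (2 * B - 1).
set x := B + s + al * k%:R.
have xB : B <= x by rewrite /x -addrA lerDl addr_ge0 // mulr_ge0.
have x0 : 0 < x by lra.
set c1 := B * x^-1.
set c2 := - (B * (x^-1 * (x + B)^-1)).
apply: (@le_trans _ _ (\int[mu]_z ((c1 * q z + c2 * pi z)%:E))%E).
  apply: le_integral_nm3; last first.
  - move=> z; apply: le_trans (lee_wpmul2r _ (IH _ _ a0 aB (addr_ge0 s0 (w_ge0 z)))) _.
      by rewrite lee_fin.
    rewrite -EFinM lee_fin -wq.
    have -> : B + (s + w z) + al * k%:R = x + w z by rewrite /x; ring.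
    have -> : c1 * q z + c2 * (w z * q z) =
      (B * (x^-1 - w z * (x^-1 * (x + B)^-1))) * q z by rewrite /c1 /c2; ring.
    apply: ler_wpM2r => //; apply: ler_wpM2l; first lra.
    exact: secant x0 (w_ge0 z) (wB z).
  - exact: meas_lin.
  - by move=> z; apply: mule_ge0; [exact: ISk_ge0 (addr_ge0 s0 (w_ge0 z))|rewrite lee_fin].
rewrite intlin lee_fin.
have -> : B + s + al * k.+1%:R = x + al by rewrite /x -[k.+1]addn1 natrD; ring.
exact: stepU.
Qed.

Let al := B / (2 * B - 1).

Lemma epsNbar_upper N :
  (epsNbar mu pi q N <= (B / (B + 0 + al * (N.-1)%:R))%:E)%E.
Proof.
have B1' := B1.
have al0 : 0 <= al by rewrite divr_ge0 //; lra.
have N0 : (0:R) <= (N.-1)%:R := ler0n _ _.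
set u := B / _.
have u0 : 0 <= u by rewrite divr_ge0 //; [lra| rewrite addr0; have := mulr_ge0 al0 N0; lra].
rewrite /epsNbar integral_mkcond.
apply: le_trans (@le_integral_nm3 _ _ _ mu _ (fun x => ((0 * q x + u * pi x)%:E)) _ (meas_lin 0 u) _) _.
- move=> x; rewrite /patch inS; case: ifPn => // xS.
  apply: mule_ge0; last by rewrite lee_fin.
  rewrite /epsN; exact: ISk_ge0 _ _ _ (w_gt0 _ xS) (lexx (0:R)).
- move=> x; rewrite /patch inS; case: ifPn => xS; last first.
    by rewrite lee_fin mul0r add0r mulr_ge0.
  rewrite mul0r add0r EFinM; apply: lee_wpmul2r; first by rewrite lee_fin.
  rewrite /epsN; exact: ISk_upper _ _ _ (w_gt0 _ xS) (wB x) (lexx (0:R)).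
- by rewrite intlin add0r.
Qed.

Lemma epsNbar_lower N : (0 < N)%N -> (((N%:R)^-1)%:E <= epsNbar mu pi q N)%E.
Proof.
move=> N0.
set k : R := (N.-1)%:R.
have k0 : 0 <= k := ler0n _ _.
have Nk : N%:R = 1 + k by rewrite /k nat1r prednK.
set c1 := (1 + 2 * k) / (1 + k) ^+ 2.
set c2 := - (k / (1 + k) ^+ 2).
have -> : (N%:R)^-1 = c2 + c1.
  have n1 : 1 + k != 0 by rewrite lt0r_neq0 //; lra.
  by rewrite Nk /c1 /c2; field.
rewrite -intlin /epsNbar [X in (_ <= X)%E]integral_mkcond.
apply: le_integral_nm2; first exact: meas_lin.
- move=> x; rewrite /patch inS; case: ifPn => // xS.
  apply: mule_ge0; last by rewrite lee_fin.
  rewrite /epsN; exact: ISk_ge0 _ _ _ (w_gt0 _ xS) (lexx (0:R)).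
- move=> x; rewrite /patch inS; case: ifPn => xS; last first.
    rewrite pi_eq0 // mulr0 addr0 lee_fin /c2 mulNr oppr_le0 mulr_ge0 //.
    by rewrite divr_ge0 // exprn_ge0 //; lra.
  apply: le_trans (lee_wpmul2r _ (ISk_lower _ _ _ (w_gt0 _ xS) (lexx (0:R)))); last first.
    by rewrite lee_fin.
  rewrite -EFinM lee_fin addr0 -/k /wgt xS addrC.
  exact: (pibound _ _ _ xS (piq _ xS) k0).
Qed.

Lemma mono_ratio (b e : R) : b <= e -> e < 1 -> (1 + b) / (1 - b) <= (1 + e) / (1 - e).
Proof.
move=> be e1.
have n1 : 1 - b != 0 by rewrite lt0r_neq0 //; lra.
have n2 : 1 - e != 0 by rewrite lt0r_neq0 //; lra.
rewrite -subr_ge0.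
have -> : (1 + e) / (1 - e) - (1 + b) / (1 - b) = 2 * (e - b) * ((1 - e)^-1 * (1 - b)^-1)
  by field; rewrite ?n1 ?n2.
rewrite !mulr_ge0 // ?invr_ge0; lra.
Qed.

Lemma final lam z1 : 1 <= lam -> 0 < pi z1 ->
  let fl := (flo lam)%:R : R in
  let ub := 2 * B / (2 * B + lam - 1) in
  [/\ 0 < w z1 * (w z1 + 2 * fl - lam) / ((w z1 + fl) * (w z1 + fl - 1)),
      ((w z1 * (w z1 + 2 * fl - lam) / ((w z1 + fl) * (w z1 + fl - 1)))%:E
         <= epsl mu pi q lam z1)%E,
      (epsl mu pi q lam z1 <= ub%:E)%E,
      [/\ lam^-1 <= blam lam, ((blam lam)%:E <= epsL mu pi q lam)%E
        & (epsL mu pi q lam <= ub%:E)%E]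
    & 1 < lam ->
      let e := fine (epsL mu pi q lam) in
      [/\ 1 < (fl ^+ 2 + 3 * fl - lam + 1) / (fl ^+ 2 - fl + lam - 1),
          (fl ^+ 2 + 3 * fl - lam + 1) / (fl ^+ 2 - fl + lam - 1)
            <= (1 + e) / (1 - e)
        & (1 + e) / (1 - e) <= (4 * B + lam - 1) / (lam - 1)]].
Proof.
move=> l1 pz; cbv zeta.
have B1' := B1.
have l0 : 0 <= lam by lra.
have [M eM] : exists M, flo lam = M.+1.
  exists (flo lam).-1; rewrite prednK //.
  by rewrite /flo truncn_gt0.
have fll : (M.+1)%:R <= lam by rewrite -eM /flo truncn_le.
have flg : lam < (M.+1)%:R + 1 by rewrite natr1 -eM /flo truncnS_gt.
rewrite /epsl /epsL /betal /blam /epsN /epsNbar /epsN eM !succnK.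
set F : R := (M.+1)%:R.
have M0 : (0:R) <= M%:R := ler0n _ _.
have EF : F = M%:R + 1 by rewrite /F natr1.
have EF2 : (M.+2)%:R = F + 1 :> R by rewrite /F natr1.
set t := lam - F.
have Elam : lam = F + t by rewrite /t; ring.
have t0 : 0 <= t by rewrite /t; lra.
have t1 : t < 1 by rewrite /t; lra.
have Eb : F + 1 - lam = 1 - t by rewrite Elam; ring.
have Eb' : 1 - (1 - t) = t by ring.
rewrite Eb Eb'.
set a := w z1.
have a0 : 0 < a := w_gt0 _ pz.
have aB : a <= B := wB z1.
have al0 : 0 <= al by rewrite divr_ge0 //; lra.
have Lo1 := ISk_lower M _ _ a0 (lexx (0:R)).
have Lo2 := ISk_lower M.+1 _ _ a0 (lexx (0:R)).
have Up1 := ISk_upper M _ _ a0 aB (lexx (0:R)).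
have Up2 := ISk_upper M.+1 _ _ a0 aB (lexx (0:R)).
have NL1 := epsNbar_lower M.+1 (ltn0Sn M).
have NL2 := epsNbar_lower M.+2 (ltn0Sn M.+1).
have NU1 := epsNbar_upper M.+1.
have NU2 := epsNbar_upper M.+2.
rewrite /epsNbar /epsN ?succnK in NL1 NL2 NU1 NU2.
have tE : (0 <= t%:E)%E by rewrite lee_fin.
have tE' : (0 <= (1 - t)%:E)%E by rewrite lee_fin; lra.
have ubE : (1 - t) * (B / (B + 0 + al * M%:R)) + t * (B / (B + 0 + al * (M%:R + 1)))
   <= 2 * B / (2 * B + lam - 1).
  rewrite Elam EF; exact: interpU B1' M0 t0.
have nF : 0 < F by rewrite EF; lra.
set I1 := (\int[mu]_(z in _) (ISk mu pi q (w z) M 0 * (pi z)%:E))%E in NL1 NU1 *.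
set I2 := (\int[mu]_(z in _) (ISk mu pi q (w z) M.+1 0 * (pi z)%:E))%E in NL2 NU2 *.
have nF1 : F + 1 != 0 by rewrite lt0r_neq0 //; lra.
have nF0 : F != 0 by rewrite lt0r_neq0.
have hb : ((F^-1 - t / ((F + 1) * F))%:E <= (1 - t)%:E * I1 + t%:E * I2)%E.
  apply: le_trans (leeD (lee_wpmul2l tE' NL1) (lee_wpmul2l tE NL2)).
  rewrite -!EFinM -EFinD lee_fin -/F EF2 le_eqVlt; apply/orP; left; apply/eqP.
  by field; repeat (apply/andP; split); apply: lt0r_neq0; nra.
have hu : ((1 - t)%:E * I1 + t%:E * I2 <= (2 * B / (2 * B + lam - 1))%:E)%E.
  apply: le_trans (leeD (lee_wpmul2l tE' NU1) (lee_wpmul2l tE NU2)) _.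
  by rewrite -!EFinM -EFinD lee_fin -/F EF.
have hl : lam^-1 <= F^-1 - t / ((F + 1) * F).
  have nl : F + t != 0 by rewrite lt0r_neq0 //; lra.
  rewrite Elam -subr_ge0.
  have -> : F^-1 - t / ((F + 1) * F) - (F + t)^-1 = t * (1 - t) * (F^-1 * (F + 1)^-1 * (F + t)^-1).
    by field; repeat (apply/andP; split); apply: lt0r_neq0; nra.
  rewrite !mulr_ge0 // ?invr_ge0; lra.
split.
- rewrite Elam EF.
  apply: divr_gt0; first by apply: mulr_gt0 => //; lra.
  by apply: mulr_gt0; lra.
- apply: le_trans (leeD (lee_wpmul2l tE' Lo1) (lee_wpmul2l tE Lo2)).
  rewrite -!EFinM -EFinD lee_fin le_eqVlt; apply/orP; left; apply/eqP.
  have n1 : a + F != 0 by rewrite lt0r_neq0 //; lra.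
  have n2 : a + F - 1 != 0 by rewrite lt0r_neq0 //; rewrite EF; lra.
  have n3 : a + 0 + M%:R != 0 by rewrite lt0r_neq0 //; lra.
  have n4 : a + 0 + M.+1%:R != 0 by rewrite lt0r_neq0 // -/F; lra.
  rewrite -/F Elam; field; rewrite ?n1 ?n2 ?n3 ?n4 //=.
  repeat (apply/andP; split); apply: lt0r_neq0; lra.
- apply: le_trans (leeD (lee_wpmul2l tE' Up1) (lee_wpmul2l tE Up2)) _.
  by rewrite -!EFinM -EFinD lee_fin -/F EF.
- by split.
move=> l1'.
set b := F^-1 - t / ((F + 1) * F) in hb hl *.
set ub := 2 * B / (2 * B + lam - 1) in hu *.
have [e He] : exists e, ((1 - t)%:E * I1 + t%:E * I2)%E = e%:E.
  move: hb hu; case: ((1 - t)%:E * I1 + t%:E * I2)%E => [r _ _|//|//].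
  by exists r.
rewrite He /=; rewrite He lee_fin in hb; rewrite He lee_fin in hu.
have ub1 : ub < 1.
  rewrite /ub ltr_pdivrMr; last lra.
  lra.
have e1 : e < 1 by apply: le_lt_trans hu ub1.
have F1 : 1 <= F by rewrite EF; lra.
have FF : F <= F ^+ 2 by rewrite expr2 ler_peMl //; lra.
have nD : 0 < F ^+ 2 - F + lam - 1 by lra.
split.
- by rewrite ltr_pdivlMr // mul1r; rewrite Elam; lra.
- have -> : (F ^+ 2 + 3 * F - lam + 1) / (F ^+ 2 - F + lam - 1) = (1 + b) / (1 - b).
    have nd : F ^+ 2 - F + lam - 1 != 0 by rewrite lt0r_neq0.
    have nd' : F ^+ 2 - F + F + t - 1 != 0 by rewrite lt0r_neq0 //; rewrite Elam in nD; lra.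
    have nb : 1 - b != 0.
      by rewrite lt0r_neq0 // subr_gt0; apply: le_lt_trans hb e1.
    move: nb; rewrite /b Elam => nb.
    by field; rewrite ?nF1 ?nF0 ?nd' ?nb //=; repeat (apply/andP; split); apply: lt0r_neq0; nra.
  exact: mono_ratio.
- have -> : (4 * B + lam - 1) / (lam - 1) = (1 + ub) / (1 - ub).
    have n1 : lam - 1 != 0 by rewrite lt0r_neq0 //; lra.
    have n2 : 2 * B + lam - 1 != 0 by rewrite lt0r_neq0 //; lra.
    by rewrite /ub; field; rewrite ?n1 ?n2 //=; repeat (apply/andP; split); apply: lt0r_neq0; lra.
  exact: mono_ratio.
Qed.

End main.

Theorem lemma8p1 (d : measure_display) (X : measurableType d) (R : realType)
  (mu : {measure set X -> \bar R}) (pi q : X -> R) :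
  sigma_finite setT mu ->
  measurable_fun setT pi -> measurable_fun setT q ->
  (forall x, 0 <= pi x) -> (forall x, 0 <= q x) ->
  ((\int[mu]_x (pi x)%:E)%E = 1%E) -> ((\int[mu]_x (q x)%:E)%E = 1%E) ->
  (forall x, 0 < pi x -> 0 < q x) ->
  (exists M : R, forall x, wgt pi q x <= M) ->
  forall (lam : R) (z1 : X), 1 <= lam -> 0 < pi z1 ->
  let w := wgt pi q in
  let what := sup (range w) in
  let fl := (flo lam)%:R : R in
  let ub := 2 * what / (2 * what + lam - 1) in
  [/\ 0 < w z1 * (w z1 + 2 * fl - lam) / ((w z1 + fl) * (w z1 + fl - 1)),
      ((w z1 * (w z1 + 2 * fl - lam) / ((w z1 + fl) * (w z1 + fl - 1)))%:E
         <= epsl mu pi q lam z1)%E,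
      (epsl mu pi q lam z1 <= ub%:E)%E,
      [/\ lam^-1 <= blam lam, ((blam lam)%:E <= epsL mu pi q lam)%E
        & (epsL mu pi q lam <= ub%:E)%E]
    & 1 < lam ->
      let e := fine (epsL mu pi q lam) in
      [/\ 1 < (fl ^+ 2 + 3 * fl - lam + 1) / (fl ^+ 2 - fl + lam - 1),
          (fl ^+ 2 + 3 * fl - lam + 1) / (fl ^+ 2 - fl + lam - 1)
            <= (1 + e) / (1 - e)
        & (1 + e) / (1 - e) <= (4 * what + lam - 1) / (lam - 1)]].
Proof.
Proof.
move=> _ mpi mq pi0 q0 ipi iq piq [M hM] lam z1 l1 pz.
have hub : has_ubound (range (wgt pi q)) by exists M => _ [x _ <-]; exact: hM.
have wB : forall x, wgt pi q x <= sup (range (wgt pi q)).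
  by move=> x; apply: ub_le_sup hub _ _; exists x.
have B1 := B_ge1 _ _ _ mu _ _ mpi mq pi0 q0 ipi iq piq _ wB.
exact: (final _ _ _ mu _ _ mpi mq pi0 q0 ipi iq piq _ wB B1 _ _ l1 pz).
Qed.
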